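(* Let $(G,b,x,k)$ be an instance of Collapsed $k$-Core and let $G'$ be the graph obtained from $G$ by adding a new vertex $u$ adjacent to all vertices of $G$. Then $(G,b,x,k)$ is a yes-instance if and only if $(G',b+1,x,k)$ is a yes-instance.
   Context: For an integer $k$, the $k$-core of a graph $G$ is the (uniquely determined) largest induced subgraph of $G$ in which every vertex has degree at least $k$ (possibly empty); its size is its number of vertices. Collapsed $k$-Core: given an undirected graph $G=(V,E)$ and integers $b$, $x$, $k$, decide whether there is a set $S\subseteq V$ with $|S|\le b$ such that the $k$-core of $G-S$ has at most $x$ vertices. *)

(* Defs.v *)
From mathcomp Require Import all_boot.
Set Implicit Arguments. Unset Strict Implicit. Unset Printing Implicit Defensive.

(* A simple undirected graph on a finite vertex type T is a symmetric,
   irreflexive relation e : rel T (hypotheses stated in the theorem). *)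

Definition deg_in (T : finType) (e : rel T) (C : {set T}) (v : T) : nat :=
  #|[set w in C | e v w]|.

Definition min_deg_ge (T : finType) (e : rel T) (k : nat) (C : {set T}) : bool :=
  [forall v in C, k <= deg_in e C v].

(* The k-core of the induced subgraph on D: the largest C subset of D whose
   induced subgraph has minimum degree >= k.  It is the union of all such C
   (the union is itself such a set, hence the unique largest one). *)
Definition kcore (T : finType) (e : rel T) (D : {set T}) (k : nat) : {set T} :=
  \bigcup_(C : {set T} | (C \subset D) && min_deg_ge e k C) C.

Definition collapsed_kcore_yes (T : finType) (e : rel T) (b x k : nat) : Prop :=
  exists S : {set T}, #|S| <= b /\ #|kcore e (~: S) k| <= x.

Definition add_universal (T : finType) (e : rel T) : rel (option T) :=
  fun a c => match a, c with
             | Some a', Some c' => e a' c'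
             | None, Some _ | Some _, None => true
             | None, None => false
             end.

(* Main.v *)
Require Import Defs.
From mathcomp Require Import all_boot.
Set Implicit Arguments. Unset Strict Implicit. Unset Printing Implicit Defensive.

Section Aux0.
Variables (T1 : finType) (e1 : rel T1) (k : nat).

Lemma kcore_sub (D C : {set T1}) : C \subset D -> min_deg_ge e1 k C -> C \subset kcore e1 D k.
Proof. by move=> sCD gC; apply: (bigcup_sup C); rewrite sCD gC. Qed.

Lemma kcoreP (D : {set T1}) v : v \in kcore e1 D k ->
  exists2 C : {set T1}, (C \subset D) && min_deg_ge e1 k C & v \in C.
Proof. by move/bigcupP=> [C HC vC]; exists C. Qed.

End Aux0.
Section Aux.
Variables (T1 T2 : finType) (e1 : rel T1) (e2 : rel T2) (k : nat).
Lemma kcore_map (f : T1 -> T2) (D1 : {set T1}) (D2 : {set T2}) : injective f ->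
  (forall C : {set T1}, C \subset D1 -> min_deg_ge e1 k C ->
     (f @: C \subset D2) && min_deg_ge e2 k (f @: C)) ->
  #|kcore e1 D1 k| <= #|kcore e2 D2 k|.
Proof.
move=> inj H; rewrite -(card_imset _ inj); apply: subset_leq_card.
apply/subsetP=> z /imsetP [v vK ->].
have [C /andP [sC gC] vC] := kcoreP vK.
have /andP [s2 g2] := H C sC gC.
have := kcore_sub s2 g2; move/subsetP; apply; exact: imset_f.
Qed.

Lemma good_map (f : T1 -> T2) (C : {set T1}) : injective f -> min_deg_ge e1 k C ->
  (forall c y, c \in C -> y \in C -> e1 c y -> e2 (f c) (f y)) ->
  min_deg_ge e2 k (f @: C).
Proof.
move=> inj gC H; apply/forallP=> z; apply/implyP=> /imsetP [c cC ->].
have := forallP gC c; rewrite cC /= => /leq_trans; apply.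
rewrite /deg_in -(card_imset _ inj); apply: subset_leq_card.
apply/subsetP=> z0 /imsetP [y]; rewrite inE => /andP [yC ey] ->.
by rewrite inE imset_f //= H.
Qed.
End Aux.

Theorem mainTheorem9 (T : finType) (e : rel T)
  (e_sym : symmetric e) (e_irr : irreflexive e) (b x k : nat) :
  collapsed_kcore_yes e b x k <->
  collapsed_kcore_yes (add_universal e) b.+1 x k.
Proof.
set e' := add_universal e.
have someinj : injective (@Some T) by move=> ? ? [].
have LA : forall D : {set option T},
    #|kcore e (Some @^-1: D) k| <= #|kcore e' D k|.
  move=> D; eapply (kcore_map someinj); move=> C sC gC.
  apply/andP; split; last by apply: (good_map someinj gC).

  by apply/subsetP=> z /imsetP [v vC ->]; have := subsetP sC v vC; rewrite inE.
have LB : forall D : {set option T}, None \notin D ->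
    #|kcore e' D k| <= #|kcore e (Some @^-1: D) k|.
  move=> D nD; rewrite -(card_imset _ someinj); apply: subset_leq_card.
  apply/subsetP=> z zK.
  have [C /andP [sC gC] zC] := kcoreP zK.
  have nC : None \notin C by apply: contra nD => /(subsetP sC).
  have CE : C = Some @: (Some @^-1: C).
    apply/setP=> y; apply/idP/idP.
    - case: y => [y|] yC; last by rewrite yC in nC.
      by apply: imset_f; rewrite inE.
    - by move=> /imsetP [v]; rewrite inE => vC ->.
  have g0 : min_deg_ge e k (Some @^-1: C).
    apply/forallP=> v; apply/implyP; rewrite inE => vC.
    have := forallP gC (Some v); rewrite vC /= => /leq_trans; apply.
    rewrite /deg_in -(card_imset _ someinj); apply: subset_leq_card.
    apply/subsetP=> y; rewrite inE => /andP [yC ey].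
    case: y yC ey => [y|] yC ey; last by rewrite yC in nC.
    by apply: imset_f; rewrite !inE yC.
  have s0 : Some @^-1: C \subset Some @^-1: D.
    by apply/subsetP=> v; rewrite !inE => /(subsetP sC).
  have := kcore_sub s0 g0 => /(imsetS Some) /subsetP; apply.
  by rewrite -CE.
have Back : forall S' : {set option T}, None \in S' -> #|S'| <= b.+1 ->
    #|kcore e' (~: S') k| <= x -> collapsed_kcore_yes e b x k.
  move=> S' nS cS cK; exists (Some @^-1: S'); split.
    rewrite -ltnS (leq_trans _ cS) // -(card_imset _ someinj).
    have nA : None \notin Some @: (Some @^-1: S') by apply/imsetP=> [[v _]].
    apply: (@leq_trans #|None |: Some @: (Some @^-1: S')|).
      by rewrite cardsU1 nA.
    apply: subset_leq_card.
    apply/subsetP=> z; rewrite !inE => /orP [/eqP -> //|/imsetP [v]].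
    by rewrite inE => vS ->.
  apply: leq_trans cK; apply: leq_trans (LA _).
  by rewrite preimsetC.
split.
- move=> [S [cS cK]]; exists (None |: Some @: S); split.
    by rewrite cardsU1 card_imset // (leq_add (leq_b1 _) cS).
  apply: leq_trans cK; apply: (leq_trans (LB _ _)); first by rewrite !inE eqxx.
  apply: eq_leq; congr (#|kcore _ _ _|); apply/setP=> v.
  by rewrite !inE (mem_imset _ _ someinj).
- move=> [S' [cS cK]].
  have [nS|nS] := boolP (None \in S'); first exact: (Back S').
  have [S'0|[w0 wS]] := set_0Vmem S'.
    exists set0; split; first by rewrite cards0.
    apply: leq_trans cK; apply: leq_trans (LA _).
    by apply: eq_leq; congr (#|kcore _ _ _|); apply/setP=> v; rewrite !inE S'0 inE.
  case: w0 wS => [w|] wS; last by rewrite wS in nS.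
  set S'' := None |: (S' :\ Some w).
  apply: (Back S''); first by rewrite !inE eqxx.
    have h := cardsD1 (Some w) S'; rewrite wS in h.
    rewrite /S'' cardsU1 !inE (negbTE nS) andbF /= add1n; rewrite h in cS; exact: cS.
  apply: leq_trans cK.
  pose sg := fun y : option T => if y == None then Some w
                                 else if y == Some w then None else y.
  have sgK : involutive sg.
    move=> y; rewrite /sg; case: (eqVneq y None) => [->|ny] /=; first by rewrite eqxx.
    case: (eqVneq y (Some w)) => [->|nw] /=; first by [].

    by rewrite (negbTE ny) (negbTE nw).
  apply: (kcore_map (inv_inj sgK)) => C sC gC; apply/andP; split.
    apply/subsetP=> z /imsetP [y yC ->].
    have := subsetP sC y yC; rewrite /S'' /sg !inE negb_or.
    case: (eqVneq y None) => [->|ny] //=.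
    case: (eqVneq y (Some w)) => [->|nw] /=; first by move=> _.
    by [].
  have nC : None \notin C by apply/negP=> /(subsetP sC); rewrite !inE eqxx.
  apply: good_map (inv_inj sgK) gC _ => c y cC yC ecy.
  case: c cC ecy => [c|] cC ecy; last by rewrite cC in nC.
  case: y yC ecy => [y|] yC ecy; last by rewrite yC in nC.
  rewrite /sg /= !(inj_eq someinj).
  case: (eqVneq c w) => [ecw|ne1].
    subst c; case: (eqVneq y w) => [eq|ney] //.
    by move: ecy; rewrite /e' /= eq e_irr.
  by case: (eqVneq y w).
Qed.
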